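(* For every synchronous one-dimensional cellular automaton $A=(S,N,f,\mathbb{Z})$ with first neighbors neighborhood $N=(-1,0,1)$, there is an asynchronous cellular automaton $\mathbb{B}=(S\times\{1,2,3\},N,f',\mathbb{Z})$ which invariantly simulates $A$ in $1.5$-linear time, i.e. with integers $k,l$ satisfying $l/k=3/2$ in the definition of invariant simulation.
   Context: A one-dimensional cellular automaton (CA) $(S,N,f,\mathbb{Z})$: finite state set $S$, neighborhood vector $N=(n_1,\dots,n_k)$, local rule $f:S^k\to S$; configurations $c:\mathbb{Z}\to S$; global map $G(c)(i)=f(c(i+n_1),\dots,c(i+n_k))$. An asynchronous CA (ACA) evolves under an update schedule $\zeta:\mathbb{N}\to\mathcal{P}(\mathbb{Z})$ in which every cell appears in infinitely many $\zeta(t)$, via $c_{t+1}=G_{\zeta(t)}(c_t)$, with $G_D(c)(i)=G(c)(i)$ if $i\in D$ and $c(i)$ otherwise. The update history from $c_0$ is the sequence $h_0=c_0,h_1,\dots$ where $h_t(i)$ is the state of cell $i$ after its $t$-th genuine state change (undefined if there is none). $\mathbb{B}$ has invariant histories on $c_0$ if every update schedule gives the same history. Direct simulation: $F_A\prec F_B$ if there is $\psi:S^A\to\mathcal{P}(S')\setminus\{\varnothing\}$ with pairwise disjoint images such that for every configuration $c$, $\{F_B(c'):c'\in\psi(c)\}\subseteq\psi(F_A(c))$, where $\psi(c)=\{c': c'(i)\in\psi(c(i))\ \forall i\}$. Unpacking map $o_m$ ($m$ a positive integer): the bijection $(S^{m})^{\mathbb{Z}}\to S^{\mathbb{Z}}$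 with $o_m(c)(mi+r)=c(i)(r)$, $r\in\mathbb{Z}_m$. Translation: $\tau_v(c)(i)=c(i-v)$. Let $H^B$ map each cell in state $h_t(i)$ to $h_{t+1}(i)$ of its invariant update history under $\mathbb{B}$ (undefined where histories are not invariant). $\mathbb{B}$ invariantly simulates $A$ if there exist $m$, $o_m$, a translation $\tau_v$ and positive integers $k,l$ with $(G^A)^k\prec o_m^{-1}\circ(H^B)^l\circ o_m\circ\tau_v$; $l/k$ is the linear time parameter. *)

(* Defs.v *)
From mathcomp Require Import all_boot all_order all_algebra.
Set Implicit Arguments. Unset Strict Implicit. Unset Printing Implicit Defensive.
Import GRing.Theory Num.Theory.
Local Open Scope ring_scope.

Definition config (T : Type) := int -> T.

Definition glob {T : Type} (f : T -> T -> T -> T) (c : config T) : config T :=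
  fun i => f (c (i - 1)) (c i) (c (i + 1)).

Definition globD {T : Type} (f : T -> T -> T -> T) (D : pred int) (c : config T)
  : config T :=
  fun i => if D i then glob f c i else c i.

Definition schedule (zeta : nat -> pred int) : Prop :=
  forall (i : int) (T : nat), exists t : nat, (T <= t)%N /\ zeta t i.

Fixpoint traj {T : Type} (f : T -> T -> T -> T) (zeta : nat -> pred int)
  (c0 : config T) (t : nat) : config T :=
  match t with
  | O => c0
  | S t' => globD f (zeta t') (traj f zeta c0 t')
  end.

Definition nchanges {T : eqType} (tr : nat -> config T) (i : int) (n : nat) : nat :=
  \sum_(u < n) (tr u.+1 i != tr u i).

(* Update history: [hist tr i t s] iff h_t(i) = s, i.e. s is the state of cell i
   after its t-th genuine state change (h_0(i) = c_0(i)). *)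
Definition hist {T : eqType} (tr : nat -> config T) (i : int) (t : nat) (s : T) : Prop :=
  exists n : nat, nchanges tr i n = t /\ tr n i = s.

Definition invariant_hist {T : eqType} (f : T -> T -> T -> T) (c0 : config T) : Prop :=
  forall zeta1 zeta2, schedule zeta1 -> schedule zeta2 ->
  forall (i : int) (t : nat) (s : T),
    hist (traj f zeta1 c0) i t s <-> hist (traj f zeta2 c0) i t s.

(* [HBiter f l c0 w] : (H^B)^l maps c0 = h_0 to w = h_l, which is defined
   everywhere, under invariant histories. *)
Definition HBiter {T : eqType} (f : T -> T -> T -> T) (l : nat) (c0 w : config T)
  : Prop :=
  invariant_hist f c0 /\
  forall zeta, schedule zeta -> forall i : int, hist (traj f zeta c0) i l (w i).

Definition transl {T : Type} (v : int) (c : config T) : config T :=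
  fun i => c (i - v).

(* Unpacking map o_M for block size M = m.+1 (positive), and its inverse. *)
Definition unpack {T : Type} (m : nat) (c : config ('I_m.+1 -> T)) : config T :=
  fun j => c (j %/ (m.+1)%:Z)%Z (inord `|(j %% (m.+1)%:Z)%Z|%N).

Definition pack {T : Type} (m : nat) (c : config T) : config ('I_m.+1 -> T) :=
  fun i r => c (i * (m.+1)%:Z + (nat_of_ord r)%:Z).

Definition psi_conf {S T : Type} (psi : S -> (T -> Prop)) (c : config S)
  : config T -> Prop :=
  fun c' => forall i, psi (c i) (c' i).

Definition inv_simulates_with {S : finType}
  (f : S -> S -> S -> S) (f' : S * 'I_3 -> S * 'I_3 -> S * 'I_3 -> S * 'I_3)
  (k l : nat) : Prop :=
  (0 < k)%N /\ (0 < l)%N /\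
  exists (m : nat) (v : int) (psi : S -> (('I_m.+1 -> S * 'I_3) -> Prop)),
    (forall s, exists x, psi s x) /\
    (forall s1 s2 x, psi s1 x -> psi s2 x -> s1 = s2) /\
    (forall (c : config S) (c' : config ('I_m.+1 -> S * 'I_3)),
       psi_conf psi c c' ->
       exists w : config (S * 'I_3),
         HBiter f' l (@unpack _ m (transl v c')) w /\
         psi_conf psi (iter k (glob f) c) (@pack _ m w)).

(* Main.v *)
Require Import Defs.
From mathcomp Require Import all_boot all_order all_algebra.
From mathcomp Require Import zify.
Set Implicit Arguments. Unset Strict Implicit. Unset Printing Implicit Defensive.
Import GRing.Theory Num.Theory.

Section Grp.
Variable S : finType.
Definition cd (s : S) : nat := index s (enum S).
Definition dc (d : S) (k : nat) : S := nth d (enum S) (k %% #|S|).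
Definition addS (d a b : S) : S := dc d (cd a + cd b).
Definition subS (d a b : S) : S := dc d (cd a + (#|S| - cd b)).

Lemma card_pos (a : S) : (0 < #|S|)%N.
Proof. by apply/card_gt0P; exists a. Qed.

Lemma cd_lt (a : S) : (cd a < #|S|)%N.
Proof. by rewrite /cd cardE index_mem mem_enum. Qed.

Lemma cd_dc d k : cd (dc d k) = k %% #|S|.
Proof.
rewrite /cd /dc index_uniq //; last exact: enum_uniq.
by rewrite -cardE ltn_mod card_pos.
Qed.

Lemma dc_cd d a : dc d (cd a) = a.
Proof. by rewrite /dc modn_small ?cd_lt // /cd nth_index // mem_enum. Qed.

Lemma sub_addl d d' a b : subS d (addS d' a b) a = b.
Proof.
rewrite /subS /addS cd_dc -[RHS](dc_cd d b) /dc; congr nth.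
have ha := cd_lt a; have hb := cd_lt b.
rewrite modnDml.
have -> : (cd a + cd b + (#|S| - cd a) = cd b + #|S|)%N by lia.
by rewrite modnDr.
Qed.

Lemma sub_addr d d' a b : subS d (addS d' a b) b = a.
Proof. by rewrite /addS addnC -/(addS d' b a) sub_addl. Qed.
End Grp.

Local Open Scope ring_scope.

Definition xb (j : int) : int := (j %/ 2)%Z.
Definition pn (j : int) : nat := `|(j %% 2)%Z|%N.

Lemma xp_of (x : int) (p : nat) : (p < 2)%N -> xb (x * 2 + p%:Z) = x /\ pn (x * 2 + p%:Z) = p.
Proof.
move=> hp; rewrite /xb /pn divzMDl // modzMDl.
rewrite divz_small ?modz_small ?addr0 //; by case: p hp => [|[|]].
Qed.

Lemma decomp (j : int) : j = xb j * 2 + (pn j)%:Z /\ (pn j < 2)%N.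
Proof.
have h0 : 0 <= (j %% 2)%Z by apply: modz_ge0.
have h1 : (j %% 2)%Z < 2 by apply: ltz_pmod.
rewrite /xb /pn gez0_abs //; split; first exact: divz_eq.
by rewrite -ltz_nat gez0_abs.
Qed.

Section Sim.
Variable S : finType.
Variable f : S -> S -> S -> S.

Definition ph (p n : nat) : 'I_3 := inord ((p + n) %% 3).
Definition pm1 (i : 'I_3) : 'I_3 := inord ((i + 2) %% 3).
Definition ps1 (i : 'I_3) : 'I_3 := inord ((i + 1) %% 3).

Definition T (po : 'I_3) (sl so sr : S) : S :=
  if nat_of_ord po == 0%N then f (subS so sl so) so (subS so sr so)
  else if nat_of_ord po == 1%N then addS so sl sr else sr.

Definition fB (l o r : S * 'I_3) : S * 'I_3 :=
  if (l.2 == pm1 o.2) && (r.2 == pm1 o.2) then (T o.2 l.1 o.1 r.1, ps1 o.2) else o.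

Definition Aa (c : config S) (t : nat) (y : int) : S := iter t (glob f) c (y - 1).

Lemma A_succ c t y : Aa c t.+1 y = f (Aa c t (y - 1)) (Aa c t y) (Aa c t (y + 1)).
Proof. by rewrite /Aa iterS /glob subrK addrK. Qed.

Definition addS' (u w : S) := addS u u w.

Definition Vqr (c : config S) (x : int) (p q r : nat) : S :=
  if p == 0%N then
    match r with
    | 0 => Aa c (2 * q) (x + q%:Z)
    | 1 => Aa c (2 * q).+1 (x + q%:Z)
    | _ => addS' (Aa c (2 * q).+1 (x + q%:Z)) (Aa c (2 * q).+1 (x + q%:Z + 1))
    end
  else
    match r with
    | 0 => Aa c (2 * q) (x + q%:Z)
    | 1 => addS' (Aa c (2 * q) (x + q%:Z)) (Aa c (2 * q) (x + q%:Z + 1))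
    | _ => Aa c (2 * q).+1 (x + q%:Z + 1)
    end.

Definition V c x p n := Vqr c x p (n %/ 3) (n %% 3).
Definition Hs c x p n : S * 'I_3 := (V c x p n, ph p n).

Lemma V_qr c x p q r : (r < 3)%N -> V c x p (q * 3 + r) = Vqr c x p q r.
Proof.
move=> hr; rewrite /V; congr Vqr.
  by rewrite divnMDl // divn_small // addn0.
by rewrite modnMDl modn_small.
Qed.

Lemma dc_def (d d' : S) k : dc d k = dc d' k.
Proof.
rewrite /dc; apply: set_nth_default.
by rewrite -cardE ltn_mod card_pos.
Qed.

Lemma addS_def (d d' a b : S) : addS d a b = addS d' a b.
Proof. exact: dc_def. Qed.

Lemma inord3 (k : nat) : (k < 3)%N -> nat_of_ord (inord k : 'I_3) = k.
Proof. by move=> h; rewrite inordK. Qed.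

Lemma ph_val p n : nat_of_ord (ph p n) = ((p + n) %% 3)%N.
Proof. by rewrite /ph inordK // ltn_mod. Qed.

Lemma eqI3 (i j : 'I_3) : (i == j) = (nat_of_ord i == nat_of_ord j).
Proof. by []. Qed.

Lemma ps1_ph p n : ps1 (ph p n) = ph p n.+1.
Proof.
apply: val_inj; rewrite /= /ps1 inordK ?ltn_mod // !ph_val.
rewrite modnDml; congr modn; lia.
Qed.

Lemma pm1_val i : nat_of_ord (pm1 i) = ((nat_of_ord i + 2) %% 3)%N.
Proof. by rewrite /pm1 inordK // ltn_mod. Qed.

Lemma en_u nl n : (nl == n) || (nl == n.+1) ->
  (ph 1 nl == pm1 (ph 0 n)) = (nl == n.+1).
Proof.
rewrite eqI3 pm1_val !ph_val => /orP [] /eqP ->; apply/idP/idP => /eqP H; apply/eqP; lia.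
Qed.

Lemma en_v nl n : (nl.+1 == n) || (nl == n) ->
  (ph 0 nl == pm1 (ph 1 n)) = (nl == n).
Proof.
rewrite eqI3 pm1_val !ph_val => /orP [] /eqP <-; apply/idP/idP => /eqP H; apply/eqP; lia.
Qed.


Lemma fire_u c x n nl nr : (nl == n) || (nl == n.+1) -> (nr == n) || (nr == n.+1) ->
  fB (Hs c (x - 1) 1 nl) (Hs c x 0 n) (Hs c x 1 nr)
  = Hs c x 0 (n + ((nl == n.+1) && (nr == n.+1))).
Proof.
move=> hl hr; rewrite /fB /= (en_u hl) (en_u hr).
case: (boolP ((nl == n.+1) && (nr == n.+1))) => [/andP [/eqP -> /eqP ->] | _]; last by rewrite addn0.
rewrite addn1 /Hs /= ps1_ph; congr pair.
have [q [r [-> hr3]]] : exists q r, n = (q * 3 + r)%N /\ (r < 3)%N.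
  by exists (n %/ 3)%N, (n %% 3)%N; rewrite -divn_eq ltn_mod.
rewrite /T ph_val add0n modnMDl modn_small //.
case: r hr3 => [|[|[|//]]] _ /=.
- rewrite (_ : (q * 3 + 0).+1 = q * 3 + 1)%N; last by lia.
  rewrite !V_qr //= /Vqr /= /addS'.
  rewrite /Vqr /= /addS'; rewrite (_ : x - 1 + q%:Z + 1 = x + q%:Z); last by lia.
  rewrite sub_addr sub_addl A_succ; congr f; congr Aa; lia.
- rewrite (_ : (q * 3 + 1).+1 = q * 3 + 2)%N; last by lia.
  rewrite !V_qr //= /Vqr /= /addS'.
  rewrite (_ : x - 1 + q%:Z + 1 = x + q%:Z); last by lia.
  exact: addS_def.
- rewrite (_ : (q * 3 + 2).+1 = q.+1 * 3 + 0)%N; last by lia.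
  by rewrite !V_qr.
Qed.

Lemma fire_v c x n nl nr : (nl.+1 == n) || (nl == n) -> (nr.+1 == n) || (nr == n) ->
  fB (Hs c x 0 nl) (Hs c x 1 n) (Hs c (x + 1) 0 nr)
  = Hs c x 1 (n + ((nl == n) && (nr == n))).
Proof.
move=> hl hr; rewrite /fB /= (en_v hl) (en_v hr).
case: (boolP ((nl == n) && (nr == n))) => [/andP [/eqP -> /eqP ->] | _]; last by rewrite addn0.
rewrite addn1 /Hs /= ps1_ph; congr pair.
have [q [r [-> hr3]]] : exists q r, n = (q * 3 + r)%N /\ (r < 3)%N.
  by exists (n %/ 3)%N, (n %% 3)%N; rewrite -divn_eq ltn_mod.
rewrite /T ph_val.
case: r hr3 => [|[|[|//]]] _ /=.
- rewrite (_ : ((1 + (q * 3 + 0)) %% 3 = 1)%N); last by lia.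
  rewrite (_ : (q * 3 + 0).+1 = q * 3 + 1)%N; last by lia.
  rewrite !V_qr //= /Vqr /= /addS'.
  rewrite (_ : x + 1 + q%:Z = x + q%:Z + 1); last by lia.
  exact: addS_def.
- rewrite (_ : ((1 + (q * 3 + 1)) %% 3 = 2)%N); last by lia.
  rewrite (_ : (q * 3 + 1).+1 = q * 3 + 2)%N; last by lia.
  rewrite !V_qr //= /Vqr /=.
  by rewrite (_ : x + 1 + q%:Z = x + q%:Z + 1); last by lia.
- rewrite (_ : ((1 + (q * 3 + 2)) %% 3 = 0)%N); last by lia.
  rewrite (_ : (q * 3 + 2).+1 = q.+1 * 3 + 0)%N; last by lia.
  rewrite !V_qr //= /Vqr /= /addS'.
  rewrite (_ : x + 1 + q%:Z = x + q%:Z + 1); last by lia.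
  rewrite sub_addr sub_addl.
  rewrite (_ : (2 * q.+1 = (2 * q).+1.+1)%N); last by lia.
  rewrite [RHS]A_succ; congr f; congr (Aa _ _ _); lia.
Qed.
End Sim.

Section Dyn.
Variable S : finType.
Variable f : S -> S -> S -> S.
Variable c : config S.

Definition Hst (j : int) (n : nat) := Hs f c (xb j) (pn j) n.

Definition en (N : int -> nat) (j : int) : bool :=
  if pn j == 0%N then (N (j - 1) == (N j).+1) && (N (j + 1) == (N j).+1)
  else (N (j - 1) == N j) && (N (j + 1) == N j).

Definition Inv (N : int -> nat) : Prop :=
  forall j, pn j = 0%N ->
   ((N (j - 1) == N j) || (N (j - 1) == (N j).+1)) &&
   ((N (j + 1) == N j) || (N (j + 1) == (N j).+1)).

Lemma nb_even j : pn j = 0%N ->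
  [/\ xb (j - 1) = xb j - 1, pn (j - 1) = 1%N, xb (j + 1) = xb j & pn (j + 1) = 1%N].
Proof.
move=> hp; have [hj _] := decomp j; rewrite hp in hj.
have e1 : j - 1 = (xb j - 1) * 2 + (1%N)%:Z by rewrite {1}hj; lia.
have e2 : j + 1 = xb j * 2 + (1%N)%:Z by rewrite {1}hj; lia.
have [a1 a2] := xp_of (xb j - 1) (isT : (1 < 2)%N).
have [b1 b2] := xp_of (xb j) (isT : (1 < 2)%N).
by rewrite e1 e2 a1 a2 b1 b2.
Qed.

Lemma nb_odd j : pn j = 1%N ->
  [/\ xb (j - 1) = xb j, pn (j - 1) = 0%N, xb (j + 1) = xb j + 1 & pn (j + 1) = 0%N].
Proof.
move=> hp; have [hj _] := decomp j; rewrite hp in hj.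
have e1 : j - 1 = xb j * 2 + (0%N)%:Z by rewrite {1}hj; lia.
have e2 : j + 1 = (xb j + 1) * 2 + (0%N)%:Z by rewrite {1}hj; lia.
have [a1 a2] := xp_of (xb j) (isT : (0 < 2)%N).
have [b1 b2] := xp_of (xb j + 1) (isT : (0 < 2)%N).
by rewrite e1 e2 a1 a2 b1 b2.
Qed.

Lemma pn01 j : pn j = 0%N \/ pn j = 1%N.
Proof. have [_] := decomp j; case: (pn j) => [|[|]] //; by [left | right]. Qed.

Lemma fire_j N j : Inv N ->
  fB f (Hst (j - 1) (N (j - 1))) (Hst j (N j)) (Hst (j + 1) (N (j + 1)))
  = Hst j (N j + en N j).
Proof.
move=> hI; rewrite /Hst /en.
case: (pn01 j) => hp.
- have [a1 a2 b1 b2] := nb_even hp.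
  have /andP [hl hr] := hI j hp.
  rewrite a1 a2 b1 b2 hp /=.
  exact: fire_u.
- have [a1 a2 b1 b2] := nb_odd hp.
  rewrite a1 a2 b1 b2 hp /=.
  have /andP [_ hl] := hI (j - 1) a2.
  have /andP [hr _] := hI (j + 1) b2.
  rewrite subrK in hl; rewrite addrK in hr.
  apply: fire_v.
    by move: hl => /orP [] /eqP ->; rewrite eqxx // orbT.
  by move: hr => /orP [] /eqP ->; rewrite eqxx // orbT.
Qed.


Fixpoint Nseq (zeta : nat -> pred int) (t : nat) : int -> nat :=
  if t is t'.+1 then fun j => (Nseq zeta t' j + (zeta t' j && en (Nseq zeta t') j))%N
  else fun _ => 0%N.

Lemma Inv_step N (D : pred int) : Inv N -> Inv (fun j => N j + (D j && en N j))%N.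
Proof.
move=> hI j hp; have [a1 a2 b1 b2] := nb_even hp.
have /andP [hl hr] := hI j hp.
rewrite /en hp a2 b2 /= subrK addrK.
move: hl hr.
case: (D j); case: (D (j - 1)); case: (D (j + 1)) => /=;
  case: (N (j - 1) == (N j).+1) / eqP; case: (N (j + 1) == (N j).+1) / eqP;
  case: (N (j - 1 - 1) == N (j - 1)) / eqP; case: (N (j + 1 + 1) == N (j + 1)) / eqP;
  case: (N j == N (j - 1)) / eqP; case: (N j == N (j + 1)) / eqP => /=;
  move=> *; apply/andP; split; apply/orP; lia.
Qed.

Lemma Inv_Nseq zeta t : Inv (Nseq zeta t).
Proof.
elim: t => [|t IH] /=; first by move=> j _; rewrite eqxx.
exact: Inv_step.
Qed.

Lemma traj_Nseq zeta b0 : (forall j, b0 j = Hst j 0) ->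
  forall t j, traj (fB f) zeta b0 t j = Hst j (Nseq zeta t j).
Proof.
move=> h0; elim=> [|t IH] j /=; first exact: h0.
rewrite /globD; case: (zeta t j) => /=; last by rewrite addn0 IH.
by rewrite /glob !IH fire_j //; apply: Inv_Nseq.
Qed.


Lemma Hst_ne j n : (Hst j n.+1 != Hst j n).
Proof.
rewrite /Hst /Hs; apply/negP => /eqP [_] /(congr1 (@nat_of_ord 3)).
rewrite !ph_val; lia.
Qed.

Lemma nchanges_Nseq zeta b0 : (forall j, b0 j = Hst j 0) ->
  forall t j, nchanges (traj (fB f) zeta b0) j t = Nseq zeta t j.
Proof.
move=> h0; elim=> [|t IH] j; first by rewrite /nchanges big_ord0.
rewrite /nchanges big_ord_recr -/(nchanges _ j t) IH (traj_Nseq zeta h0 t.+1) (traj_Nseq zeta h0 t) /=.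
case: (zeta t j && en (Nseq zeta t) j) => /=.
  by rewrite addn1 Hst_ne addn1.
by rewrite addn0 eqxx addn0.
Qed.

Lemma Nseq_mono zeta t t' j : (t <= t')%N -> (Nseq zeta t j <= Nseq zeta t' j)%N.
Proof.
elim: t' => [|t' IH]; first by rewrite leqn0 => /eqP ->.
rewrite leq_eqVlt => /orP [/eqP -> //|]; rewrite ltnS => /IH h.
by apply: (leq_trans h); rewrite /= leq_addr.
Qed.

Section Live.
Variable zeta : nat -> pred int.
Hypothesis hz : schedule zeta.

Lemma ev3 k1 k2 k3 j : (exists T, k1 <= Nseq zeta T (j - 1))%N -> (exists T, k2 <= Nseq zeta T j)%N ->
  (exists T, k3 <= Nseq zeta T (j + 1))%N ->
  exists t, [/\ zeta t j, k1 <= Nseq zeta t (j - 1), k2 <= Nseq zeta t j & k3 <= Nseq zeta t (j + 1)]%N.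
Proof.
move=> [T1 h1] [T2 h2] [T3 h3].
have [t [ht hzt]] := hz j (maxn T1 (maxn T2 T3)).
exists t; split => //.
- apply: (leq_trans h1); apply: Nseq_mono; apply: (leq_trans _ ht); exact: leq_maxl.
- apply: (leq_trans h2); apply: Nseq_mono; apply: (leq_trans _ ht);
  apply: (leq_trans _ (leq_maxr _ _)); exact: leq_maxl.
- apply: (leq_trans h3); apply: Nseq_mono; apply: (leq_trans _ ht);
  apply: (leq_trans _ (leq_maxr _ _)); exact: leq_maxr.
Qed.

Lemma step_odd k : (forall j, exists T, k <= Nseq zeta T j)%N ->
  forall j, pn j = 1%N -> exists T, (k.+1 <= Nseq zeta T j)%N.
Proof.
move=> hk j hp; have [a1 a2 b1 b2] := nb_odd hp.
have [t [ht h1 h2 h3]] := ev3 (hk (j - 1)) (hk j) (hk (j + 1)).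
case: (ltnP k (Nseq zeta t j)) => hlt; first by exists t.
exists t.+1; rewrite /= ht /=.
have /andP [_ hl] := (Inv_Nseq zeta t : Inv _) (j - 1) a2.
have /andP [hr _] := (Inv_Nseq zeta t : Inv _) (j + 1) b2.
rewrite subrK in hl; rewrite addrK in hr.
rewrite /en hp /=.
move: h1 h2 h3 hlt hl hr.
set a := Nseq zeta t (j - 1); set b := Nseq zeta t j; set d := Nseq zeta t (j + 1).
move=> h1 h2 h3 hlt hl hr.
case/orP: hl => /eqP hl; case/orP: hr => /eqP hr;
  case: (a == b) / eqP; case: (d == b) / eqP => /= *; lia.
Qed.

Lemma step_even k : (forall j, exists T, k <= Nseq zeta T j)%N ->
  (forall j, pn j = 1%N -> exists T, k.+1 <= Nseq zeta T j)%N ->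
  forall j, pn j = 0%N -> exists T, (k.+1 <= Nseq zeta T j)%N.
Proof.
move=> hk ho j hp; have [a1 a2 b1 b2] := nb_even hp.
have [t [ht h1 h2 h3]] := ev3 (ho _ a2) (hk j) (ho _ b2).
case: (ltnP k (Nseq zeta t j)) => hlt; first by exists t.
exists t.+1; rewrite /= ht /=.
have /andP [hl hr] := (Inv_Nseq zeta t : Inv _) j hp.
rewrite /en hp /=.
move: h1 h2 h3 hlt hl hr.
set a := Nseq zeta t (j - 1); set b := Nseq zeta t j; set d := Nseq zeta t (j + 1).
move=> h1 h2 h3 hlt hl hr.
case/orP: hl => /eqP hl; case/orP: hr => /eqP hr;
  case: (a == b.+1) / eqP; case: (d == b.+1) / eqP => /= *; lia.
Qed.

Lemma live k j : exists T, (k <= Nseq zeta T j)%N.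
Proof.
elim: k j => [|k IH] j; first by exists 0%N.
have ho := step_odd IH.
case: (pn01 j) => hp; last exact: ho.
exact: step_even IH ho j hp.
Qed.

Lemma hit t j : exists T, Nseq zeta T j = t.
Proof.
have [T hT] := live t j.
elim: T hT => [|T IH] hT; first by exists 0%N; move: hT; rewrite leqn0 => /eqP.
case: (leqP t (Nseq zeta T j)) => h; first exact: IH.
exists T.+1; move: hT h => /=; case: (_ && _) => /=; lia.
Qed.

End Live.

End Dyn.

Section Fin.
Variable S : finType.
Variable f : S -> S -> S -> S.
Variable c : config S.

Lemma hist_iff zeta (hz : schedule zeta) b0 (h0 : forall j, b0 j = Hst f c j 0) j t s :
  hist (traj (fB f) zeta b0) j t s <-> s = Hst f c j t.
Proof.
split.
- case=> n [hn <-].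
  by rewrite (traj_Nseq zeta h0) -(nchanges_Nseq zeta h0) hn.
- move=> ->; have [T hT] := hit hz t j.
  by exists T; rewrite (nchanges_Nseq zeta h0) (traj_Nseq zeta h0) hT.
Qed.

Lemma HB b0 (h0 : forall j, b0 j = Hst f c j 0) :
  HBiter (fB f) 3 b0 (fun j => Hst f c j 3).
Proof.
split.
- move=> z1 z2 h1 h2 i t s; rewrite (hist_iff h1 h0) (hist_iff h2 h0); done.
- by move=> z hz i; apply/(hist_iff hz h0).
Qed.
End Fin.

Definition psiB (S : finType) (s : S) (blk : 'I_2 -> S * 'I_3) : Prop :=
  forall r : 'I_2, blk r = (s, inord r).

Lemma initB (S : finType) (f : S -> S -> S -> S) (c : config S) c' :
  psi_conf (@psiB S) c c' -> forall j, @unpack _ 1%N (transl 1 c') j = Hst f c j 0.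
Proof.
move=> hc j; rewrite /unpack /transl hc /Hst /Hs.
have [_ hp] := decomp j.
congr pair.
- rewrite -[0%N]/(0 * 3 + 0)%N V_qr // /Vqr.
  rewrite /Aa /= addr0; by case: (pn j == 0%N).
- apply: val_inj; rewrite /= ph_val addn0 modn_small; last by lia.
  rewrite inordK; last exact: (ltn_trans (ltn_ord _) (isT : (2 < 3)%N)).
  by rewrite inordK.
Qed.

Lemma finalB (S : finType) (f : S -> S -> S -> S) (c : config S) :
  psi_conf (@psiB S) (iter 2 (glob f) c) (@pack _ 1%N (fun j => Hst f c j 3)).
Proof.
move=> i r; rewrite /pack /Hst.
have [-> ->] := xp_of i (ltn_ord r).
rewrite /Hs -[3%N]/(1 * 3 + 0)%N V_qr // /Vqr /Aa.
have -> : i + (1%N)%:Z - 1 = i by lia.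
congr pair; first by case: (nat_of_ord r == 0%N).
apply: val_inj; rewrite /= ph_val inordK; last by case: r => [[|[|]]].
by case: r => [[|[|]]].
Qed.

Local Close Scope ring_scope.

Theorem mainTheorem4 :
  forall (S : finType) (f : S -> S -> S -> S),
  exists f' : S * 'I_3 -> S * 'I_3 -> S * 'I_3 -> S * 'I_3,
  exists k l : nat, (l * 2 = k * 3)%N /\ inv_simulates_with f f' k l.
Proof.
move=> S f; exists (fB f), 2%N, 3%N; split => //.
split => //; split => //.
exists 1%N, 1%R, (@psiB S); split.
  by move=> s; exists (fun r => (s, inord r)).
split.
  by move=> s1 s2 x h1 h2; move: (h1 ord0); rewrite h2 => -[].
move=> c c' hc; exists (fun j => Hst f c j 3); split.
  by apply: HB => j; apply: initB.
exact: finalB.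
Qed.
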